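(* Let $m\ge 1$ and $p,q\in\{1,\dots,2n-1\}$ satisfy $m+(p-n)_+\ge 1+(q-n)_+$, where $x_+=\max(x,0)$. Write $s_1<s_2<\cdots<s_{2n}$ for the elements of $\mathcal{I}$ in increasing order (so $s_j=j$ for $j\le n$ and $s_j=\overline{2n-j+1}$ for $n<j\le 2n$). Suppose $M_1\in M_p(m)$ is one of the following monomials (empty products being $1$): (1) $M_1=X_{s_2}(p+m-1)X_{s_3}(p+m-2)\cdots X_{s_p}(m+1)\,X_{\bar 1}(m)$; (2) $M_1=X_{s_2}(p+m-1)X_{s_3}(p+m-2)\cdots X_{s_{p+1}}(m)$; (3) $M_1=X_{s_1}(p+m-1)X_{s_2}(p+m-2)\cdots X_{s_{p-1}}(m+1)\,X_{\bar 1}(m)$. Then for every $M_2\in M_q(1)$, the monomial $M_1\cdot M_2$ is not a highest weight vector of $\mathcal{M}$.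
   Context: Fix $n\ge 2$ and type $C_n$ with $I=\{1,\dots,n\}$. Let $\mathcal{M}$ be the set of Laurent monomials $M=\prod_{i\in I,k\in\mathbb{Z}}Y_i(k)^{y_i(k)}$ ($y_i(k)\in\mathbb{Z}$, finitely many nonzero); put $Y_0(k)=Y_{n+1}(k)=1$. For $i\in I$ put $\varepsilon_i(M)=\max_k(-\sum_{j>k}y_i(j))$; $M$ is a highest weight vector if $\varepsilon_i(M)=0$ for all $i\in I$ (equivalently all Kashiwara operators $\tilde e_i$ of Nakajima's monomial crystal kill $M$). The $X$-variables are $X_i(k)=Y_i(k)Y_{i-1}(k+1)^{-1}$ and $X_{\bar i}(k)=Y_{i-1}(k+n-i+1)Y_i(k+n-i+1)^{-1}$ for $1\le i\le n$, $k\in\mathbb{Z}$. The alphabet $\mathcal{I}=\{1,\dots,n,\bar n,\dots,\bar 1\}$ is ordered $1<\cdots<n<\bar n<\cdots<\bar 1$. For $1\le k\le 2n$, $m\in\mathbb{Z}$: $M_k(m)=\{X_{i_1}(k+m-1)X_{i_2}(k+m-2)\cdots X_{i_k}(m): i_j\in\mathcal{I},\ i_1<\cdots<i_k\}$. *)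

(* Defs.v *)
From mathcomp Require Import all_boot all_order all_algebra.
Set Implicit Arguments. Unset Strict Implicit. Unset Printing Implicit Defensive.
Import Order.TTheory GRing.Theory Num.Theory.
Local Open Scope ring_scope.

(* A Laurent monomial prod Y_i(k)^e is represented by a finite list of
   factors (i, k, e) meaning Y_i(k)^e; the exponent y_i(k) is the sum of the
   e over all factors with index (i,k).  The product of monomials is list
   concatenation.  Factors with i = 0 (i.e. Y_0(k) = 1) are harmless since
   only i in I = {1..n} is ever inspected. *)
Definition monomial := seq (nat * int * int).

Definition yexp (M : monomial) (i : nat) (k : int) : int :=
  \sum_(t <- M | (t.1.1 == i) && (t.1.2 == k)) t.2.

Definition tailsum (M : monomial) (i : nat) (k : int) : int :=
  \sum_(t <- M | (t.1.1 == i) && (k < t.1.2)) t.2.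

(* epsilon_i(M) = max_k (- sum_{j>k} y_i(j)); this max is always >= 0
   (the tail sum vanishes for k large), so epsilon_i(M) = 0 iff all the
   tail sums are >= 0.  Highest weight: epsilon_i(M) = 0 for all i in I. *)
Definition highest_weight (n : nat) (M : monomial) : Prop :=
  forall (i : nat), (1 <= i <= n)%N -> forall k : int, 0 <= tailsum M i k.

Inductive letter := Unb of nat | Bar of nat.

Definition letter_valid (n : nat) (a : letter) : bool :=
  match a with Unb i => (1 <= i <= n)%N | Bar i => (1 <= i <= n)%N end.

Definition lrank (n : nat) (a : letter) : nat :=
  match a with Unb i => i | Bar i => (2 * n + 1 - i)%N end.

Definition lt_letter (n : nat) (a b : letter) : bool := (lrank n a < lrank n b)%N.

Definition sl (n j : nat) : letter :=
  if (j <= n)%N then Unb j else Bar (2 * n - j + 1)%N.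

Definition Xvar (n : nat) (a : letter) (k : int) : monomial :=
  match a with
  | Unb i => [:: (i, k, 1); (i.-1, k + 1, -1)]
  | Bar i => [:: (i.-1, k + (n - i + 1)%N%:Z, 1); (i, k + (n - i + 1)%N%:Z, -1)]
  end.

(* X_{a_1}(k+m-1) X_{a_2}(k+m-2) ... X_{a_k}(m) for a list ls = [a_1;...;a_k] *)
Definition Xprod (n : nat) (ls : seq letter) (m : int) : monomial :=
  flatten [seq Xvar n (nth (Unb 0) ls t) ((size ls)%:Z + m - 1 - t%:Z)
          | t <- iota 0 (size ls)].

Definition inMk (n k : nat) (m : int) (M : monomial) : Prop :=
  exists ls : seq letter,
    [/\ size ls = k, all (letter_valid n) ls, sorted (lt_letter n) ls
      & M = Xprod n ls m].

(* Main.v *)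
Require Import Defs.
From mathcomp Require Import all_boot all_order all_algebra.
From mathcomp Require Import zify ring.
Import Order.TTheory GRing.Theory Num.Theory.
Local Open Scope ring_scope.

Lemma tailsum_cat M1 M2 i k : tailsum (M1 ++ M2) i k = tailsum M1 i k + tailsum M2 i k.
Proof. by rewrite /tailsum big_cat. Qed.

Lemma Xprod_cons n a ls m :
  Xprod n (a :: ls) m = Xvar n a ((size ls)%:Z + m) ++ Xprod n ls m.
Proof.
rewrite /Xprod /=.
have -> : iota 1 (size ls) = map (addn 1) (iota 0 (size ls)) by rewrite -iotaDl.
rewrite -map_comp.
congr (_ ++ _).
  congr Xvar; lia.
congr flatten; apply: eq_map => t /=.
rewrite add1n /=; congr Xvar; lia.
Qed.

Lemma Xprod_rcons n ls a m :
  Xprod n (rcons ls a) m = Xprod n ls (m + 1) ++ Xvar n a m.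
Proof.
elim: ls m => [|b ls IH] m.
  rewrite /Xprod /=. rewrite cats0. congr Xvar; lia.
rewrite rcons_cons !Xprod_cons IH size_rcons catA; congr ((_ ++ _) ++ _).
congr Xvar; lia.
Qed.

Definition idx (n b : nat) : nat := if (b <= n)%N then b else (2*n - b)%N.
Definition zt (n b : nat) (w : int) (i : nat) (K : int) : int :=
  if (idx n b == i) && (K < w - (minn b n)%:Z) then 1 else 0.

Lemma ts_Xvar n r k i K : (1 <= r <= 2*n)%N -> (1 <= i)%N ->
  tailsum (Xvar n (sl n r) k) i K = zt n r (k + r%:Z) i K - zt n r.-1 (k + r%:Z) i K.
Proof.
move=> hr hi.
rewrite /tailsum /sl /zt /idx; case: ifP => hrn /=; rewrite !big_cons big_nil /=;
repeat case: ifP; move=> *; lia.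
Qed.

Section Core.
Variable n : nat.

Definition Vz (f : nat -> int -> int) (tau : int) :=
  forall i k, (1 <= i <= n)%N -> tau <= k -> f i k = 0.
Definition Nz (f : nat -> int -> int) (tau : int) :=
  exists i, (1 <= i <= n)%N /\ f i (tau - 1) < 0.
Definition Az (f : nat -> int -> int) (tau w0 : int) :=
  forall j, (1 <= j <= n)%N -> j%:Z + tau <= w0 -> 0 < f j (tau - 1) ->
    exists i, (j < i <= n)%N /\ f i (tau - 1) < 0.
Definition Inv f w0 := exists tau, [/\ Vz f tau, Nz f tau & Az f tau w0].
Definition Single f beta w0 := forall i k, (1 <= i <= n)%N -> f i k = zt n beta w0 i k.

Lemma F_PN r0 r1 (w1 : int) : (r0.+1 < r1)%N ->
  w1 - (r1 - r0 - 1)%N%:Z - (minn r0 n)%:Z <= w1 - (minn r1.-1 n)%:Z.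
Proof. move=> h; lia. Qed.

Lemma F_PNeq r0 r1 (w1 : int) : (r0.+1 < r1)%N ->
  w1 - (r1 - r0 - 1)%N%:Z - (minn r0 n)%:Z = w1 - (minn r1.-1 n)%:Z ->
  (idx n r0 < idx n r1.-1)%N.
Proof. move=> h; rewrite /idx; case: ifP; case: ifP; move=> *; lia. Qed.

Lemma F_ni r1 : (2 <= r1 <= 2 * n)%N -> (1 <= idx n r1.-1 <= n)%N.
Proof. move=> h; rewrite /idx; case: ifP; move=> *; lia. Qed.

Lemma F_niN r1 (w1 : int) : (2 <= r1 <= 2 * n)%N ->
  (idx n r1.-1)%:Z + (w1 - (minn r1.-1 n)%:Z) <= w1.
Proof. move=> h; rewrite /idx; case: ifP; move=> *; lia. Qed.

Lemma F_Q r1 beta (w1 : int) : (2 <= r1 <= 2 * n)%N -> (r1 <= beta)%N ->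
  w1 - (minn beta n)%:Z <= w1 - (minn r1.-1 n)%:Z /\
  (w1 - (minn beta n)%:Z = w1 - (minn r1.-1 n)%:Z -> (idx n beta < idx n r1.-1)%N).
Proof. move=> h hb; rewrite /idx; split; [lia|]; case: ifP; case: ifP; move=> *; lia. Qed.


Lemma jump_step r0 r1 (w0 w1 : int) f1 beta :
  (r0.+1 < r1)%N -> (r1 <= 2*n)%N -> w0 = w1 - (r1 - r0 - 1)%N%:Z ->
  ((r1 <= beta)%N /\ Single f1 beta w1) \/ Inv f1 w1 ->
  Inv (fun i k => zt n r0 w0 i k - zt n r1.-1 w1 i k + f1 i k) w0.
Proof.
move=> h01 h1n hw0 IH.
have hr1 : (2 <= r1 <= 2*n)%N by lia.
have [N hN] : exists N : int, N = w1 - (minn r1.-1 n)%:Z by eexists.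
have PN : w0 - (minn r0 n)%:Z <= N by rewrite hw0 hN; exact: F_PN.
have PNeq : w0 - (minn r0 n)%:Z = N -> (idx n r0 < idx n r1.-1)%N.
  by rewrite hw0 hN; exact: F_PNeq.
have /andP[ni1 nin] := @F_ni r1 hr1.
have niN : (idx n r1.-1)%:Z + N <= w1 by rewrite hN; exact: F_niN.
have z0hi : forall i k, N <= k -> zt n r0 w0 i k = 0.
  by move=> i k hk; rewrite /zt; case: ifP => //; lia.
have z1hi : forall i k, N <= k -> zt n r1.-1 w1 i k = 0.
  by move=> i k hk; rewrite /zt; case: ifP => //; lia.
have z1N : forall i, zt n r1.-1 w1 i (N - 1) = if idx n r1.-1 == i then 1 else 0.
  by move=> i; rewrite /zt; case: ifP; case: ifP => //; lia.
have z0N : forall i, zt n r0 w0 i (N - 1) =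
    if (idx n r0 == i) && (w0 - (minn r0 n)%:Z == N) then 1 else 0.
  by move=> i; rewrite /zt; case: ifP; case: ifP => //; lia.
case: IH => [[hb hS]|[tau' [V' N' A']]].
- have [Q1 Q2] := @F_Q r1 beta w1 hr1 hb.
  exists N; split.
  + move=> i k hi hk /=; rewrite z0hi // z1hi // hS // /zt; case: ifP => //; lia.
  + exists (idx n r1.-1); split; first by lia.
    rewrite /=. rewrite z0N. rewrite z1N. rewrite hS; last by lia. rewrite /zt; case: ifP; case: ifP; case: ifP; move=> *; lia.
  + move=> j hj _ /=; rewrite z0N z1N hS // => hpos.
    exists (idx n r1.-1); split.
      move: hpos; rewrite /zt; case: ifP; case: ifP; case: ifP; move=> *; lia.
    rewrite /= z0N z1N hS; last by lia.
    rewrite /zt; case: ifP; case: ifP; case: ifP; move=> *; lia.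
- have V0 : forall i k, (1 <= i <= n)%N -> N <= k -> tau' <= k ->
      zt n r0 w0 i k - zt n r1.-1 w1 i k + f1 i k = 0.
    by move=> i k hi hk hk'; rewrite z0hi // z1hi // V' //; lia.
  case: (ltgtP tau' N) => htau.
  +
    have f1N : forall i, (1 <= i <= n)%N -> f1 i (N - 1) = 0 by move=> i hi; apply: V' => //; lia.
    exists N; split.
    * by move=> i k hi hk; apply: V0 => //; lia.
    * exists (idx n r1.-1); split; first by lia.
      rewrite /= z0N z1N f1N; last by lia.
      case: ifP; case: ifP; move=> *; lia.
    * move=> j hj _ /=; rewrite z0N z1N f1N // => hpos.
      exists (idx n r1.-1); split.
        move: hpos; case: ifP; case: ifP; move=> *; lia.
      rewrite /= z0N z1N f1N; last by lia.
      case: ifP; case: ifP; move=> *; lia.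
  +
    have hk : N <= tau' - 1 by lia.
    exists tau'; split.
    * by move=> i k hi hk'; apply: V0 => //; lia.
    * have [i [hi hf]] := N'; exists i; split => //=.
      by rewrite (z0hi _ _ hk) (z1hi _ _ hk); lia.
    * move=> j hj hjt /=; rewrite (z0hi _ _ hk) (z1hi _ _ hk) => hpos.
      have [||i [hi hf]] := A' j hj; [lia|lia|].
      exists i; split => //=.
      by rewrite (z0hi _ _ hk) (z1hi _ _ hk); lia.
  +
    subst tau'.
    have R : exists i, (idx n r1.-1 <= i <= n)%N /\
        zt n r0 w0 i (N - 1) - zt n r1.-1 w1 i (N - 1) + f1 i (N - 1) < 0.
      case: (lerP (f1 (idx n r1.-1) (N - 1)) 0) => hf.
        exists (idx n r1.-1); split; first by lia.
        rewrite z0N z1N; case: ifP; case: ifP; move=> *; lia.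
      have [|||i [hi hf']] := A' (idx n r1.-1); [lia|lia|lia|].
      exists i; split; first by lia.
      rewrite z0N z1N; case: ifP; case: ifP; move=> *; lia.
    exists N; split.
    * by move=> i k hi hk; apply: V0 => //; lia.
    * have [i [hi hf]] := R; exists i; split => //; lia.
    * move=> j hj hjt /= hpos.
      case: (ltnP j (idx n r1.-1)) => hjn.
        have [i [hi hf]] := R; exists i; split => //; lia.
      move: hpos; rewrite z0N z1N => hpos.
      have [||i [hi hf]] := A' j hj; [lia| |].
        move: hpos; case: ifP; case: ifP; move=> *; lia.
      exists i; split => //=.
      rewrite z0N z1N; case: ifP; case: ifP; move=> *; lia.
Qed.

End Core.

Definition XR n (rs : seq nat) (m : int) := Xprod n (map (sl n) rs) m.

Lemma zt0 n w i k : (1 <= i)%N -> zt n 0 w i k = 0.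
Proof. by move=> hi; rewrite /zt /idx leq0n; case: ifP => //; lia. Qed.

Lemma ts_XR_nil n m i k : tailsum (XR n [::] m) i k = 0.
Proof. by rewrite /XR /Xprod /tailsum /= big_nil. Qed.

Lemma ts_XR_cons n r rs m i k : (1 <= r <= 2*n)%N -> (1 <= i)%N ->
  tailsum (XR n (r :: rs) m) i k =
  zt n r ((size rs)%:Z + m + r%:Z) i k - zt n r.-1 ((size rs)%:Z + m + r%:Z) i k
  + tailsum (XR n rs m) i k.
Proof.
by move=> hr hi; rewrite /XR map_cons Xprod_cons tailsum_cat ts_Xvar // size_map.
Qed.

Lemma Inv_ext n f g w : (forall i k, (1 <= i <= n)%N -> f i k = g i k) ->
  Inv n f w -> Inv n g w.
Proof.
move=> e [tau [V N A]]; exists tau; split.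
- by move=> i k hi hk; rewrite -e // V.
- by have [i [hi hf]] := N; exists i; rewrite -e.
- move=> j hj hjw; rewrite -e // => hp; have [i [hi hf]] := A j hj hjw hp.
  by exists i; split => //; rewrite -e //; lia.
Qed.

Lemma Single_ext n f g b w : (forall i k, (1 <= i <= n)%N -> f i k = g i k) ->
  Single n f b w -> Single n g b w.
Proof. by move=> e S i k hi; rewrite -e // S. Qed.

Lemma col_ind n rs : forall r0 m, path ltn r0 rs -> all (fun r => 1 <= r <= 2*n)%N (r0 :: rs) ->
  Single n (fun i K => zt n r0 ((size rs)%:Z + m + r0%:Z) i K + tailsum (XR n rs m) i K)
    (r0 + size rs) ((size rs)%:Z + m + r0%:Z) \/
  Inv n (fun i K => zt n r0 ((size rs)%:Z + m + r0%:Z) i K + tailsum (XR n rs m) i K)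
    ((size rs)%:Z + m + r0%:Z).
Proof.
elim: rs => [|r1 rs IH] r0 m hp hall.
  by left => i k hi /=; rewrite ts_XR_nil addr0 addn0.
move: hp => /= /andP[h01 hp]; move: hall => /= /and3P[hr0 hr1 hall].
have := IH r1 m hp; rewrite /= hr1 hall => /(_ isT) IH1.
have e : forall i k, (1 <= i <= n)%N ->
   zt n r0 ((size (r1 :: rs))%:Z + m + r0%:Z) i k + tailsum (XR n (r1 :: rs) m) i k =
   zt n r0 ((size (r1 :: rs))%:Z + m + r0%:Z) i k - zt n r1.-1 ((size rs)%:Z + m + r1%:Z) i k
   + (zt n r1 ((size rs)%:Z + m + r1%:Z) i k + tailsum (XR n rs m) i k).
  by move=> i k hi; rewrite ts_XR_cons //; [ring | lia].
case: (ltnP r0.+1 r1) => h.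
- right; apply: Inv_ext; first by move=> i k hi; rewrite e.
  apply: (@jump_step n r0 r1 _ _ _ (r1 + size rs)) => //; [lia | rewrite /=; lia | ].
  by case: IH1 => [S|I]; [left; split => //; lia | right].
- have r1e : r1 = r0.+1 by lia.
  subst r1.
  have -> : (size (r0.+1 :: rs))%:Z + m + r0%:Z = (size rs)%:Z + m + r0.+1%:Z by rewrite /=; lia.
  have e2 : forall i k, (1 <= i <= n)%N ->
     zt n r0.+1 ((size rs)%:Z + m + r0.+1%:Z) i k + tailsum (XR n rs m) i k =
     zt n r0 ((size rs)%:Z + m + r0.+1%:Z) i k + tailsum (XR n (r0.+1 :: rs) m) i k.
    move=> i k hi; rewrite ts_XR_cons //; last by lia.
    rewrite /=; ring.
  case: IH1 => [S|I].
  + left; apply: (@Single_ext n _ _ _ _ e2).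
    by rewrite -addSnnS.
  + by right; apply: (@Inv_ext n _ _ _ e2).
Qed.

Lemma col_main n rs m : sorted ltn rs -> all (fun r => 1 <= r <= 2*n)%N rs -> rs <> [::] ->
  Single n (fun i k => tailsum (XR n rs m) i k) (size rs) ((size rs)%:Z + m) \/
  exists tau, Vz n (fun i k => tailsum (XR n rs m) i k) tau /\
              Nz n (fun i k => tailsum (XR n rs m) i k) tau.
Proof.
case: rs => [//|r0 rs] hp hall _.
have /andP[hr0 hall'] := hall.
set W := (size rs)%:Z + m + r0%:Z.
have e : forall i k, (1 <= i <= n)%N ->
    zt n 0 (W - (r0 - 0 - 1)%N%:Z) i k - zt n r0.-1 W i k + (zt n r0 W i k + tailsum (XR n rs m) i k)
    = tailsum (XR n (r0 :: rs) m) i k.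
  move=> i k hi; rewrite ts_XR_cons //; last by lia.
  rewrite zt0; last by lia.
  rewrite /W; ring.
have IVN : forall f w, Inv n f w -> (forall i k, (1 <= i <= n)%N -> f i k = tailsum (XR n (r0 :: rs) m) i k) ->
    exists tau, Vz n (fun i k => tailsum (XR n (r0 :: rs) m) i k) tau /\
              Nz n (fun i k => tailsum (XR n (r0 :: rs) m) i k) tau.
  move=> f w I ef; have [tau [V N _]] := @Inv_ext n _ _ _ ef I.
  by exists tau.
have CI := @col_ind n rs r0 m hp hall.
case: (ltnP 1 r0) => h0.
- right; apply: IVN e.
  apply: (@jump_step n 0 r0 _ W _ (r0 + size rs)) => //; first by lia.
  by case: CI => [S|I]; [left; split => //; lia | right].
- have r0e : r0 = 1%N by lia.
  subst r0.
  have e1 : forall i k, (1 <= i <= n)%N ->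
      zt n 1 W i k + tailsum (XR n rs m) i k = tailsum (XR n [:: 1%N & rs] m) i k.
    move=> i k hi; rewrite -e // /= !zt0; try lia; ring.
  case: CI => [S|I].
  + left; have -> : (size [:: 1%N & rs])%:Z + m = W by rewrite /W /=; lia.
    by apply: (@Single_ext n _ _ _ _ e1); rewrite add1n in S.
  + right; exact: IVN I e1.
Qed.

Lemma ztE n b w i k : zt n b w i k =
  if (b <= n)%N then (if (b == i) && (k < w - b%:Z) then 1 else 0)
  else (if ((2 * n - b)%N == i) && (k < w - n%:Z) then 1 else 0).
Proof.
rewrite /zt /idx; case: (leqP b n) => h //.
Qed.

Lemma run_single n len : forall a m, (1 <= a)%N -> (a + len <= 2*n)%N ->
  forall i k, (1 <= i <= n)%N ->
  zt n a (len%:Z + m + a%:Z) i k + tailsum (XR n (iota a.+1 len) m) i k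
  = zt n (a + len) (len%:Z + m + a%:Z) i k.
Proof.
elim: len => [|len IH] a m ha hal i k hi.
  by rewrite ts_XR_nil addr0 addn0.
rewrite /= ts_XR_cons; [|lia|lia].
rewrite size_iota /=.
have -> : (len.+1)%:Z + m + a%:Z = len%:Z + m + (a.+1)%:Z by lia.
have -> : zt n a (len%:Z + m + (a.+1)%:Z) i k +
  (zt n a.+1 (len%:Z + m + (a.+1)%:Z) i k - zt n a (len%:Z + m + (a.+1)%:Z) i k +
   tailsum (XR n (iota a.+2 len) m) i k) =
  zt n a.+1 (len%:Z + m + (a.+1)%:Z) i k + tailsum (XR n (iota a.+2 len) m) i k by ring.
rewrite IH; [|lia|lia|lia].
by rewrite addSnnS.
Qed.

Lemma ts_iota n a len m i k : (1 <= a)%N -> (a + len <= 2*n)%N -> (1 <= i <= n)%N ->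
  tailsum (XR n (iota a len.+1) m) i k =
  zt n (a + len) (len%:Z + m + a%:Z) i k - zt n a.-1 (len%:Z + m + a%:Z) i k.
Proof.
move=> ha hal hi.
rewrite /= ts_XR_cons; [|lia|lia].
rewrite size_iota -run_single //.
ring.
Qed.

Ltac zcrush := rewrite ?ztE; repeat (case: ifP => ?); lia.

Lemma M1_top n m p ls1 : (2 <= n)%N -> 1 <= m -> (1 <= p <= 2*n-1)%N ->
  ls1 = rcons [seq sl n j | j <- iota 2 (p - 1)] (sl n (2 * n))
  \/ ls1 = [seq sl n j | j <- iota 2 p]
  \/ ls1 = rcons [seq sl n j | j <- iota 1 (p - 1)] (sl n (2 * n)) ->
  exists T1 : int, m + (p - n)%N%:Z + 1 <= T1 /\
   (forall i k, (1 <= i <= n)%N -> T1 - 1 <= k -> tailsum (Xprod n ls1 m) i k <= 0) /\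
   tailsum (Xprod n ls1 m) 1 (T1 - 1) < 0.
Proof.
move=> hn hm hp [->|[->|->]].
-
  have ts2 : forall i k, (1 <= i <= n)%N -> tailsum (Xvar n (sl n (2 * n)) m) i k =
      zt n (2 * n) (m + (2 * n)%N%:Z) i k - zt n (2 * n).-1 (m + (2 * n)%N%:Z) i k.
    by move=> i k hi; rewrite ts_Xvar //; lia.
  exists (m + (maxn p n)%:Z); rewrite Xprod_rcons.
  case E: (p - 1)%N => [|p''].
  + have hp1 : p = 1%N by lia.
    have T : forall i k, (1 <= i <= n)%N -> tailsum (Xprod n [seq sl n i | i <- iota 2 0] (m + 1) ++ Xvar n (sl n (2 * n)) m) i k =
      zt n (2 * n) (m + (2 * n)%N%:Z) i k - zt n (2 * n).-1 (m + (2 * n)%N%:Z) i k.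
      by move=> i k hi; rewrite tailsum_cat ts2 // -/(XR n [::] (m+1)) ts_XR_nil add0r.
    split; [lia|split].
    * by move=> i k hi hk; rewrite T //; zcrush.
    * by rewrite T //; zcrush.
  + have T : forall i k, (1 <= i <= n)%N -> tailsum (Xprod n [seq sl n i | i <- iota 2 p''.+1] (m + 1) ++ Xvar n (sl n (2 * n)) m) i k =
      zt n (2 + p'') (p''%:Z + (m + 1) + 2%:Z) i k - zt n 1 (p''%:Z + (m + 1) + 2%:Z) i k
      + (zt n (2 * n) (m + (2 * n)%N%:Z) i k - zt n (2 * n).-1 (m + (2 * n)%N%:Z) i k).
      by move=> i k hi; rewrite tailsum_cat ts2 // -/(XR n _ (m+1)) ts_iota //; lia.
    split; [lia|split].
    * by move=> i k hi hk; rewrite T //; zcrush.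
    * by rewrite T //; zcrush.
-
  exists (m + p%:Z).
  case E: p hp => [|p'] hp //.
  have T : forall i k, (1 <= i <= n)%N -> tailsum (Xprod n [seq sl n i | i <- iota 2 p'.+1] m) i k =
      zt n (2 + p') (p'%:Z + m + 2%:Z) i k - zt n 1 (p'%:Z + m + 2%:Z) i k.
    by move=> i k hi; rewrite -/(XR n _ m) ts_iota //; lia.
  split; [lia|split].
  * by move=> i k hi hk; rewrite T //; zcrush.
  * by rewrite T //; zcrush.
-
  have ts2 : forall i k, (1 <= i <= n)%N -> tailsum (Xvar n (sl n (2 * n)) m) i k =
      zt n (2 * n) (m + (2 * n)%N%:Z) i k - zt n (2 * n).-1 (m + (2 * n)%N%:Z) i k.
    by move=> i k hi; rewrite ts_Xvar //; lia.
  exists (m + n%:Z); rewrite Xprod_rcons.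
  case E: (p - 1)%N => [|p''].
  + have T : forall i k, (1 <= i <= n)%N -> tailsum (Xprod n [seq sl n i | i <- iota 1 0] (m + 1) ++ Xvar n (sl n (2 * n)) m) i k =
      zt n (2 * n) (m + (2 * n)%N%:Z) i k - zt n (2 * n).-1 (m + (2 * n)%N%:Z) i k.
      by move=> i k hi; rewrite tailsum_cat ts2 // -/(XR n [::] (m+1)) ts_XR_nil add0r.
    split; [lia|split].
    * by move=> i k hi hk; rewrite T //; zcrush.
    * by rewrite T //; zcrush.
  + have T : forall i k, (1 <= i <= n)%N -> tailsum (Xprod n [seq sl n i | i <- iota 1 p''.+1] (m + 1) ++ Xvar n (sl n (2 * n)) m) i k =
      zt n (1 + p'') (p''%:Z + (m + 1) + 1%:Z) i k
      + (zt n (2 * n) (m + (2 * n)%N%:Z) i k - zt n (2 * n).-1 (m + (2 * n)%N%:Z) i k).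
      move=> i k hi; rewrite tailsum_cat ts2 // -/(XR n _ (m+1)) ts_iota //; try lia.
      rewrite zt0; [ring|lia].
    split; [lia|split].
    * by move=> i k hi hk; rewrite T //; zcrush.
    * by rewrite T //; zcrush.
Qed.

Theorem lemma5p8 (n : nat) (m : int) (p q : nat) :
  (2 <= n)%N -> 1 <= m ->
  (1 <= p <= 2 * n - 1)%N -> (1 <= q <= 2 * n - 1)%N ->
  1 + (q - n)%N%:Z <= m + (p - n)%N%:Z ->
  forall ls1 : seq letter,
    ls1 = rcons [seq sl n j | j <- iota 2 (p - 1)] (sl n (2 * n))
    \/ ls1 = [seq sl n j | j <- iota 2 p]
    \/ ls1 = rcons [seq sl n j | j <- iota 1 (p - 1)] (sl n (2 * n)) ->
  forall M2 : monomial, inMk n q 1 M2 ->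
    ~ highest_weight n (Xprod n ls1 m ++ M2).
Proof.
move=> hn hm hp hq hcond ls1 hls1 M2 [ls [hsz hval hsort ->]] hw.
have [T1 [hT1 [M1le M1neg]]] := @M1_top n m p ls1 hn hm hp hls1.
set rs := map (lrank n) ls.
have els0 : forall s, all (letter_valid n) s -> s = map (sl n) (map (lrank n) s).
  elim => [//|a s IH] /= /andP[ha hs]; rewrite -IH //; congr cons.
  case: a ha => i /= h; rewrite /sl; case: ifP => h2 //; try lia.
  congr Bar; lia.
have els : ls = map (sl n) rs by rewrite /rs -els0.
have hrs_sorted : sorted ltn rs by rewrite /rs sorted_map.
have hrs_all : all (fun r => 1 <= r <= 2 * n)%N rs.
  rewrite /rs all_map; apply: sub_all hval => a.
  by case: a => i /=; lia.
have hrs_size : size rs = q by rewrite /rs size_map.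
have hrs_nil : rs <> [::] by move=> e; rewrite e /= in hrs_size; lia.
have M2e : Xprod n ls 1 = XR n rs 1 by rewrite /XR -els.
rewrite M2e in hw.
have h1 : (1 <= 1 <= n)%N by lia.
case: (@col_main n rs 1 hrs_sorted hrs_all hrs_nil) => [S|[tau [V [i0 [hi0 hneg]]]]].
- have := hw 1%N h1 (T1 - 1); rewrite tailsum_cat S // hrs_size.
  have z : zt n q (q%:Z + 1) 1 (T1 - 1) = 0 by zcrush.
  rewrite z; lia.
- case: (lerP T1 tau) => ht.
  + have := hw i0 hi0 (tau - 1); rewrite tailsum_cat.
    have := M1le i0 (tau - 1) hi0 ltac:(lia); lia.
  + have := hw 1%N h1 (T1 - 1); rewrite tailsum_cat (V 1%N (T1 - 1) h1); last by lia.
    lia.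
Qed.
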